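(* Let $(B_i)_{i\in Q_0}\in\bigoplus_i\mathrm{Herm}(V_i)$ and let $a_{i,1}\leq\ldots\leq a_{i,d_i}$ be the eigenvalues of $B_i$. Set $\Theta_{i,k}=a_{i,k}-a_{i,k+1}$ for $i\in Q_0$, $1\le k<d_i$, and $\Theta_{i,d_i}=a_{i,d_i}$. Then $(B_i)_i$ belongs to the image of $\mu_Q$ if and only if the tuple of scalar operators $(\Theta_{i,k}\cdot\mathrm{id}_{V_{i,k}})_{i,k}$ belongs to the image of $\mu_{Q_{\mathbf d}}:R_{\hat{\mathbf d}}(Q_{\mathbf d})\to\bigoplus_{i,k}\mathrm{Herm}(V_{i,k})$.
   Context: $Q$ is a finite quiver with vertex set $Q_0$ and arrows $\alpha:i\to j$; $\mathbf d\in\mathbb NQ_0$. For any quiver $\Gamma$ and complex vector spaces $W_v$ ($v\in\Gamma_0$) with Hermitian inner products, $R(\Gamma)=\bigoplus_{\alpha:v\to w}\mathrm{Hom}(W_v,W_w)$ and $\mu_\Gamma((f_\alpha))_v=\sum_{\alpha:w\to v}f_\alpha f_\alpha^*-\sum_{\alpha:v\to w}f_\alpha^*f_\alpha\in\mathrm{Herm}(W_v)$. For $Q$ we use spaces $V_i$ of dimension $d_i$, giving $\mu_Q$ on $R_{\mathbf d}(Q)$. The leg-extended quiver $Q_{\mathbf d}$ has vertices $(i,k)$ for $i\in Q_0$, $1\leq k\leq d_i$, an arrow $\alpha:(i,d_i)\to(j,d_j)$ for each arrow $\alpha:i\to j$ of $Q$ (with $d_i,d_j\geq1$), and arrows $\beta_{i,k}:(i,k)\to(i,k+1)$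 for $i\in Q_0$, $1\le k<d_i$. Its dimension vector $\hat{\mathbf d}$ is $\hat d_{i,k}=k$. For $Q_{\mathbf d}$ we use Hermitian spaces $V_{i,k}$ of dimension $k$, with $V_{i,d_i}=V_i$ (same Hermitian form), giving $\mu_{Q_{\mathbf d}}$ on $R_{\hat{\mathbf d}}(Q_{\mathbf d})$. *)

(* Defs.v *)
From HB Require Import structures.
From mathcomp Require Import all_boot all_order all_algebra.
Set Implicit Arguments. Unset Strict Implicit. Unset Printing Implicit Defensive.
Import Order.TTheory GRing.Theory Num.Theory.
Local Open Scope ring_scope.

(* Hermitian spaces W_v are identified with C^(dim) with the standard
   Hermitian form (choice of orthonormal bases); a linear map W_v -> W_w is a
   matrix 'M_(dim w, dim v) acting on column vectors; its adjoint is the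
   conjugate transpose. *)
Definition adjmx (C : numClosedFieldType) m n (M : 'M[C]_(m, n)) : 'M[C]_(n, m) :=
  map_mx Num.conj (M^T).

(* Moment map of a quiver Gamma = (vertices I, arrows E, source s, target t)
   with dimension vector dim, evaluated at vertex v:
     mu(f)_v = sum_{e : w -> v} f_e f_e^* - sum_{e : v -> w} f_e^* f_e.
   conform_mx only performs the (trivial) type cast 'M_(dim (t e)) -> 'M_(dim v)
   when t e = v (resp. s e = v). *)
Definition mu (C : numClosedFieldType) (I E : finType) (s t : E -> I)
  (dim : I -> nat) (f : forall e : E, 'M[C]_(dim (t e), dim (s e))) (v : I)
  : 'M[C]_(dim v) :=
  \sum_(e | t e == v) conform_mx (0 : 'M[C]_(dim v)) (f e *m adjmx (f e))
  - \sum_(e | s e == v) conform_mx (0 : 'M[C]_(dim v)) (adjmx (f e) *m f e).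

Lemma lastord_proof n : (0 < n)%N -> (n.-1 < n)%N.
Proof. by rewrite ltn_predL. Qed.
Definition lastord n (H : (0 < n)%N) : 'I_n := Ordinal (lastord_proof H).

Section LegQuiver.
Variables (V A : finType) (s t : A -> V) (d : V -> nat).

(* vertex (i,k), 1 <= k <= d_i, is encoded as (i, k-1) with k-1 : 'I_(d i) *)
Definition QdV : finType := {i : V & 'I_(d i)}.
Definition hatd (x : QdV) : nat := (tagged x).+1.

(* arrows: original arrows with d_i, d_j >= 1, and beta_{i,k} (1 <= k < d_i),
   encoded as (i, k-1) with k-1 : 'I_((d i).-1) *)
Definition QdA : finType :=
  ({a : A | (0 < d (s a))%N && (0 < d (t a))%N} + {i : V & 'I_((d i).-1)})%type.

Lemma beta_src_proof n (k : 'I_n.-1) : (k < n)%N.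
Proof. case: k => k /=; rewrite ltn_predRL => /ltnW //. Qed.
Lemma beta_tgt_proof n (k : 'I_n.-1) : (k.+1 < n)%N.
Proof. case: k => k /=; rewrite ltn_predRL //. Qed.

Definition Qdsrc (e : QdA) : QdV :=
  match e with
  | inl a => existT _ (s (val a)) (lastord (proj1 (elimT andP (valP a))))
  | inr b => existT _ (tag b) (Ordinal (beta_src_proof (tagged b)))
  end.
Definition Qdtgt (e : QdA) : QdV :=
  match e with
  | inl a => existT _ (t (val a)) (lastord (proj2 (elimT andP (valP a))))
  | inr b => existT _ (tag b) (Ordinal (beta_tgt_proof (tagged b)))
  end.
End LegQuiver.

(* Theta_{i,k} = a_{i,k} - a_{i,k+1} for k < d_i, Theta_{i,d_i} = a_{i,d_i}
   (here with 0-based index k-1 = tagged x). *)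
Definition anat (C : numClosedFieldType) (V : finType) (d : V -> nat)
  (a : forall i, 'I_(d i) -> C) (i : V) (m : nat) : C :=
  if insub m is Some k then a i k else 0.
Definition Theta (C : numClosedFieldType) (V : finType) (d : V -> nat)
  (a : forall i, 'I_(d i) -> C) (x : QdV d) : C :=
  let i := tag x in let k := nat_of_ord (tagged x) in
  if (k.+1 < d i)%N then anat a i k - anat a i k.+1 else anat a i k.

(* Main.v *)
Require Import Defs.
From HB Require Import structures.
From mathcomp Require Import all_boot all_order all_algebra.
Import Order.TTheory GRing.Theory Num.Theory.
Local Open Scope ring_scope.
Set Implicit Arguments. Unset Strict Implicit. Unset Printing Implicit Defensive.
From mathcomp Require Import perm ring.
Section LA.
Variable C : numClosedFieldType.

Lemma sylvester_gen p q (M : 'M[C]_(p, q)) (N : 'M[C]_(q, p)) :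
  'X ^+ q * char_poly (M *m N) = 'X ^+ p * char_poly (N *m M).
Proof.
set Mp := map_mx polyC M; set Np := map_mx polyC N.
pose W := block_mx ('X%:M : 'M_p) Mp Np (1%:M : 'M_q).
have h1 : \det W = char_poly (M *m N).
  have := det_mulmx (block_mx 1%:M (- Mp) 0 1%:M) W.
  rewrite det_ublock !det1 mul1r mulmx_block !mul1mx !mul0mx !add0r mulNmx.
  rewrite mulmx1 subrr det_lblock det1 mulr1 mul1r => <-.
  by rewrite /char_poly /char_poly_mx map_mxM.
have h2 : 'X ^+ q * \det W = 'X ^+ p * char_poly (N *m M).
  have := det_mulmx (block_mx 1%:M 0 (- Np) ('X%:M : 'M_q)) W.
  rewrite det_lblock det1 mul1r det_scalar mulmx_block !mul1mx !mul0mx !addr0.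
  rewrite mulmx1 mul_mx_scalar mul_scalar_mx scalerN addNr.
  rewrite det_ublock det_scalar addrC => <-.
  by rewrite /char_poly /char_poly_mx map_mxM mulNmx.
by rewrite -h2 h1.
Qed.


Lemma sylvester q (M : 'M[C]_(q.+1, q)) (N : 'M[C]_(q, q.+1)) :
  char_poly (M *m N) = 'X * char_poly (N *m M).
Proof.
have := sylvester_gen M N; rewrite exprS -mulrA.
have nz : ('X^q : {poly C}) != 0 by rewrite expf_neq0 // polyX_eq0.
move=> h; apply: (mulfI nz); by rewrite h mulrCA.
Qed.

Lemma char_poly_conj n (P A : 'M[C]_n) : P \in unitmx ->
  char_poly (invmx P *m A *m P) = char_poly A.
Proof.
move=> Pu; rewrite /char_poly /char_poly_mx.
have -> : ('X%:M - map_mx polyC (invmx P *m A *m P)) =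
   map_mx polyC (invmx P) *m ('X%:M - map_mx polyC A) *m map_mx polyC P.
  rewrite mulmxBr mulmxBl !map_mxM; congr (_ - _).
  by rewrite mul_mx_scalar -scalemxAl -map_mxM mulVmx // map_mx1 scalemx1.
rewrite !det_mulmx !det_map_mx mulrC mulrA -rmorphM -det_mulmx mulmxV //.
by rewrite det1 mul1r.
Qed.

Lemma char_poly_diag n (d : 'rV[C]_n) :
  char_poly (diag_mx d) = \prod_(k < n) ('X - (d 0 k)%:P).
Proof.
rewrite char_poly_trig ?diag_mx_is_trig //.
by apply: eq_bigr => k _; rewrite mxE eqxx mulr1n.
Qed.


Lemma char_poly_affine n (A : 'M[C]_n) (b : 'I_n -> C) (c s : C) : s != 0 ->
  char_poly A = \prod_(k < n) ('X - (b k)%:P) ->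
  char_poly (c%:M + s *: A) = \prod_(k < n) ('X - (c + s * b k)%:P).
Proof.
move=> s0 hA; set q : {poly C} := s^-1 *: ('X - c%:P).
have sq : s%:P * q = 'X - c%:P.
  by rewrite /q -mul_polyC mulrA -polyCM mulfV // mul1r.
have E : char_poly_mx (c%:M + s *: A) =
    s%:P *: map_mx (comp_poly q) (char_poly_mx A).
  apply/matrixP => i j; rewrite !mxE comp_polyB comp_polyC.
  case: (i == j); rewrite ?mulr1n ?mulr0n ?comp_polyX ?comp_poly0 mulrBr ?sq;
    rewrite ?polyCD ?polyCM ?polyC0; ring.
rewrite /char_poly E detZ det_map_mx -/(char_poly A) hA rmorph_prod.
have -> : s%:P ^+ n = \prod_(k < n) s%:P by rewrite prodr_const card_ord.
rewrite -big_split.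
apply: eq_bigr => k _ /=; rewrite comp_polyB comp_polyX comp_polyC mulrBr sq.
by rewrite polyCD polyCM; ring.
Qed.


Lemma adjmxM m n p (M : 'M[C]_(m, n)) (N : 'M[C]_(n, p)) :
  adjmx (M *m N) = adjmx N *m adjmx M.
Proof. by rewrite /adjmx trmx_mul map_mxM. Qed.

Lemma adjmxK m n (M : 'M[C]_(m, n)) : adjmx (adjmx M) = M.
Proof. exact: trmxCK. Qed.

Lemma unitary_adj_l n (U : 'M[C]_n) : U \is unitarymx -> adjmx U *m U = 1%:M.
Proof. by move=> Uu; rewrite -(mul1mx (adjmx U *m U)) mulmxA mulmxKtV. Qed.

Lemma unitary_adj_r n (U : 'M[C]_n) : U \is unitarymx -> U *m adjmx U = 1%:M.
Proof. by move/unitarymxP. Qed.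

Lemma perm_unitary n (p : {perm 'I_n}) : perm_mx p \is @unitarymx C n n.
Proof.
apply/unitarymxP; rewrite tr_perm_mx map_perm_mx -perm_mxM mulgV.
exact: perm_mx1.
Qed.

Lemma adj_perm n (p : {perm 'I_n}) : adjmx (perm_mx p : 'M[C]_n) = perm_mx p^-1.
Proof. by rewrite /adjmx tr_perm_mx map_perm_mx. Qed.

Lemma spectral_sorted n (A : 'M[C]_n) (a : 'I_n -> C) :
  adjmx A = A -> char_poly A = \prod_(k < n) ('X - (a k)%:P) ->
  exists U : 'M[C]_n, U \is unitarymx /\ A = adjmx U *m diag_mx (\row_k a k) *m U.
Proof.
move=> hA cA.
have herm : A \is hermsymmx.
  by rewrite is_hermitianmxE expr0 scale1r; apply/eqP; rewrite -[LHS]hA.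
have /orthomx_spectralP EA := hermitian_normalmx herm.
set P := spectralmx A in EA; set sp := spectral_diag A in EA.
have Pu : P \is unitarymx := spectral_unitarymx A.
have cA' : char_poly A = \prod_(k < n) ('X - (sp 0 k)%:P).
  by rewrite EA char_poly_conj ?unitarymx_unit // char_poly_diag.
pose ta := [tuple a k | k < n]; pose ts := [tuple sp 0 k | k < n].
have pe : perm_eq ta ts.
  apply: prod_XsubC_eq; rewrite !big_map -!enumT !big_enum /=.
  by rewrite -cA -cA'.
have [p hp] := tuple_permP pe.
have ap : forall k, a k = sp 0 (p k).
  move=> k; have := congr1 (fun t => tnth t k) (val_inj hp : ta = _).
  by rewrite !tnth_mktuple.
exists (perm_mx p *m P); split; first by rewrite mul_unitarymx ?perm_unitary.
have Dp : diag_mx (\row_k a k) = perm_mx p *m diag_mx sp *m perm_mx p^-1.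
  rewrite -row_permE -col_permE.
  apply/matrixP => i j; rewrite !mxE ap (inj_eq perm_inj).
  by case: eqP => [->|].
rewrite adjmxM adj_perm Dp !mulmxA -(mulmxA _ (perm_mx p^-1)) -perm_mxM mulVg.
rewrite perm_mx1 mulmx1 -(mulmxA _ (perm_mx p^-1)) -perm_mxM mulVg perm_mx1.
by rewrite mulmx1 {1}EA invmx_unitary.
Qed.


Lemma herm_split n (A : 'M[C]_n) : adjmx A = A ->
  exists a : 'I_n -> C, char_poly A = \prod_(k < n) ('X - (a k)%:P).
Proof.
move=> hA.
have herm : A \is hermsymmx.
  by rewrite is_hermitianmxE expr0 scale1r; apply/eqP; rewrite -[LHS]hA.
have /orthomx_spectralP EA := hermitian_normalmx herm.
exists (fun k => spectral_diag A 0 k).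
by rewrite {1}EA char_poly_conj ?unitarymx_unit ?spectral_unitarymx // char_poly_diag.
Qed.

Lemma herm_similar n (A B : 'M[C]_n) : adjmx A = A -> adjmx B = B ->
  char_poly A = char_poly B ->
  exists W : 'M[C]_n, W \is unitarymx /\ B = adjmx W *m A *m W.
Proof.
move=> hA hB cAB; have [a ca] := herm_split hA.
have [U [Uu EA]] := spectral_sorted hA ca.
have [V [Vu EB]] := spectral_sorted hB (etrans (esym cAB) ca).
exists (adjmx U *m V); split.
  rewrite mul_unitarymx //; apply/unitarymxP.
  by rewrite -[X in _ *m X]/(adjmx (adjmx U)) adjmxK unitary_adj_l.
rewrite adjmxM adjmxK EA !mulmxA -(mulmxA _ U) unitary_adj_r // mulmx1.
by rewrite -(mulmxA _ U (adjmx U)) unitary_adj_r // mulmx1 EB.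
Qed.

Lemma mu_conj (I E : finType) (s t : E -> I) (dim : I -> nat)
  (f : forall e, 'M[C]_(dim (t e), dim (s e))) (W : forall i, 'M[C]_(dim i)) :
  (forall i, W i \is unitarymx) -> forall v,
  @mu C I E s t dim (fun e => adjmx (W (t e)) *m f e *m W (s e)) v
   = adjmx (W v) *m mu f v *m W v.
Proof.
move=> Wu v; rewrite /mu mulmxBr mulmxBl !mulmx_sumr !mulmx_suml.
congr (_ - _); apply: eq_bigr => e /eqP te.
  rewrite -te !conform_mx_id !adjmxM !adjmxK !mulmxA -(mulmxA _ (W (s e))).
  by rewrite unitary_adj_r // mulmx1.
rewrite -te !conform_mx_id !adjmxM !adjmxK !mulmxA -(mulmxA _ (W (t e))).
by rewrite unitary_adj_r // mulmx1.
Qed.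


Lemma conformK m n p q (A : 'M[C]_(m, n)) (B : 'M[C]_(p, q)) (B' : 'M[C]_(m, n)) :
  m = p -> n = q -> conform_mx B' (conform_mx B A) = A.
Proof. by move=> mp nq; subst; rewrite !conform_mx_id. Qed.

Lemma conform_conform m n p q r u (X : 'M[C]_(m, n)) (B1 : 'M[C]_(p, q))
  (B2 : 'M[C]_(r, u)) : m = p -> n = q ->
  conform_mx B2 (conform_mx B1 X) = conform_mx B2 X.
Proof. by move=> mp nq; subst; rewrite !conform_mx_id. Qed.

Lemma conform0 m n p q : conform_mx (0 : 'M[C]_(p, q)) (0 : 'M[C]_(m, n)) = 0.
Proof.
case: (eqVneq m p) => [mp|]; last by move=> h; rewrite nonconform_mx // h.
case: (eqVneq n q) => [nq|]; last by move=> h; rewrite nonconform_mx // h orbT.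
by subst; rewrite conform_mx_id.
Qed.

Lemma conform_sum m n (I : finType) (P : pred I) (F : I -> 'M[C]_m) : m = n ->
  conform_mx (0 : 'M[C]_n) (\sum_(j | P j) F j) =
  \sum_(j | P j) conform_mx (0 : 'M[C]_n) (F j).
Proof.
move=> mn; subst; rewrite conform_mx_id; apply: eq_bigr => j _.
by rewrite conform_mx_id.
Qed.

Lemma conform_sub m n (X Y : 'M[C]_m) : m = n ->
  conform_mx (0 : 'M[C]_n) (X - Y) = conform_mx 0 X - conform_mx 0 Y.
Proof. by move=> mn; subst; rewrite !conform_mx_id. Qed.

Lemma conform_scalar m n (c : C) : m = n ->
  conform_mx (0 : 'M[C]_n) (c%:M : 'M[C]_m) = c%:M.
Proof. by move=> mn; subst; rewrite !conform_mx_id. Qed.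

Lemma mx_dim0 m n (M : 'M[C]_(m, n)) : ~~ ((0 < n)%N && (0 < m)%N) -> M = 0.
Proof.
case: m M => [|m] M; first by rewrite flatmx0.
by case: n M => [|n] M //; rewrite thinmx0.
Qed.

Lemma conform_mul_adj m n m' n' p (G : 'M[C]_(m, n)) : m = m' -> n = n' ->
  conform_mx (0 : 'M[C]_p) (conform_mx (0 : 'M[C]_(m', n')) G
      *m adjmx (conform_mx (0 : 'M[C]_(m', n')) G))
  = conform_mx (0 : 'M[C]_p) (G *m adjmx G).
Proof. by move=> mm nn; subst; rewrite !conform_mx_id. Qed.

Lemma conform_adj_mul m n m' n' p (G : 'M[C]_(m, n)) : m = m' -> n = n' ->
  conform_mx (0 : 'M[C]_p) (adjmx (conform_mx (0 : 'M[C]_(m', n')) G)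
      *m conform_mx (0 : 'M[C]_(m', n')) G)
  = conform_mx (0 : 'M[C]_p) (adjmx G *m G).
Proof. by move=> mm nn; subst; rewrite !conform_mx_id. Qed.

Lemma char_poly_conform m n (X : 'M[C]_m) : m = n ->
  char_poly (conform_mx (0 : 'M[C]_n) X) = char_poly X.
Proof. by move=> mn; subst; rewrite conform_mx_id. Qed.

End LA.

Lemma sum_sigE (M : nmodType) (T : finType) (P Q : pred T) (F : T -> M) :
  \sum_(x | Q x && P x) F x = \sum_(y : {x | P x} | Q (val y)) F (val y).
Proof.
rewrite (reindex_omap (val : {x | P x} -> T) insub); last first.
  by move=> x /andP[_ px]; rewrite insubT.
by apply: eq_bigl => -[x px] /=; rewrite insubT px andbT /= eqxx andbT.
Qed.

Section Qd.
Variables (C : numClosedFieldType) (V A : finType) (s t : A -> V) (d : V -> nat).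

Lemma QdV_eqE (j i : V) (u : 'I_(d j)) (v : 'I_(d i)) :
  (existT (fun i => 'I_(d i)) j u == existT _ i v :> QdV d) = (j == i) && (u == v :> nat).
Proof.
case: (eqVneq j i) => [ji|nji] /=.
  by subst j; rewrite eq_Tagged.
by apply/negP => /eq_tag /= ji; rewrite ji eqxx in nji.
Qed.

Variable g : forall e : QdA s t d, 'M[C]_(hatd (Qdtgt e), hatd (Qdsrc e)).

Definition gb i (m : 'I_((d i).-1)) : 'M[C]_(m.+2, m.+1) :=
  g (inr (existT (fun i => 'I_((d i).-1)) i m)).

Definition Bin i k : 'M[C]_(k.+1) :=
  \sum_(m : 'I_((d i).-1) | m.+1 == k) conform_mx 0 (gb m *m adjmx (gb m)).
Definition Bout i k : 'M[C]_(k.+1) :=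
  \sum_(m : 'I_((d i).-1) | m == k :> nat) conform_mx 0 (adjmx (gb m) *m gb m).
Definition Qin i k : 'M[C]_(k.+1) :=
  \sum_(a : {a : A | (0 < d (s a))%N && (0 < d (t a))%N} |
        (t (val a) == i) && ((d (t (val a))).-1 == k))
     conform_mx 0 (g (inl a) *m adjmx (g (inl a))).
Definition Qout i k : 'M[C]_(k.+1) :=
  \sum_(a : {a : A | (0 < d (s a))%N && (0 < d (t a))%N} |
        (s (val a) == i) && ((d (s (val a))).-1 == k))
     conform_mx 0 (adjmx (g (inl a)) *m g (inl a)).

Lemma muQd i (k : 'I_(d i)) :
  mu g (existT _ i k) = (Bin i k + Qin i k) - (Bout i k + Qout i k).
Proof.
rewrite /mu !big_sumType [Bin _ _ + _]addrC [Bout _ _ + _]addrC.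
congr (_ + _ - (_ + _)).
- apply: eq_bigl => a /=; exact: QdV_eqE.
- rewrite (eq_big (fun b : {j : V & 'I_((d j).-1)} =>
      (tag b == i) && ((tagged b).+1 == k))
      (fun b => conform_mx (0 : 'M_(k.+1))
           (gb (tagged b) *m adjmx (gb (tagged b))))); last first.
  + by case=> j m.
  + by case=> j m /=; rewrite QdV_eqE.
  rewrite -(sig_big_dep (fun j => j == i)
     (fun j (m : 'I_((d j).-1)) => m.+1 == k)
     (fun j (m : 'I_((d j).-1)) => conform_mx (0 : 'M_(k.+1)) (gb m *m adjmx (gb m)))).
  by rewrite big_pred1_eq.
- apply: eq_bigl => a /=; exact: QdV_eqE.
rewrite (eq_big (fun b : {j : V & 'I_((d j).-1)} =>
    (tag b == i) && (tagged b == k :> nat))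
    (fun b => conform_mx (0 : 'M_(k.+1))
         (adjmx (gb (tagged b)) *m gb (tagged b)))); last first.
- by case=> j m.
- by case=> j m /=; rewrite QdV_eqE.
rewrite -(sig_big_dep (fun j => j == i)
   (fun j (m : 'I_((d j).-1)) => m == k :> nat)
   (fun j (m : 'I_((d j).-1)) => conform_mx (0 : 'M_(k.+1)) (adjmx (gb m) *m gb m))).
by rewrite big_pred1_eq.
Qed.


Lemma Bin_S i k (h : (k < (d i).-1)%N) :
  Bin i k.+1 = gb (Ordinal h) *m adjmx (gb (Ordinal h)).
Proof.
rewrite /Bin (big_pred1 (Ordinal h)) ?conform_mx_id //.
Qed.

Lemma Bin_0 i : Bin i 0 = 0.
Proof. by rewrite /Bin big_pred0. Qed.

Lemma Bout_lt i k (h : (k < (d i).-1)%N) :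
  Bout i k = adjmx (gb (Ordinal h)) *m gb (Ordinal h).
Proof. by rewrite /Bout (big_pred1 (Ordinal h)) ?conform_mx_id. Qed.

Lemma Bout_top i k : ~~ (k < (d i).-1)%N -> Bout i k = 0.
Proof.
move=> h; rewrite /Bout big_pred0 // => m; apply/negP => /eqP mk.
by move: (ltn_ord m); rewrite mk (negbTE h).
Qed.

Lemma Qin_lt i k : (k.+1 < d i)%N -> Qin i k = 0.
Proof.
move=> h; rewrite /Qin big_pred0 // => a; apply/negP => /andP[/eqP ti /eqP ki].
by move: h; rewrite -ki ti; case: (d i) => [|n] //=; rewrite ltnn.
Qed.

Lemma Qout_lt i k : (k.+1 < d i)%N -> Qout i k = 0.
Proof.
move=> h; rewrite /Qout big_pred0 // => a; apply/negP => /andP[/eqP ti /eqP ki].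
by move: h; rewrite -ki ti; case: (d i) => [|n] //=; rewrite ltnn.
Qed.

Lemma Qtop (f : forall a : A, 'M[C]_(d (t a), d (s a))) :
  (forall a' : {a : A | (0 < d (s a))%N && (0 < d (t a))%N},
     f (val a') = conform_mx 0 (g (inl a'))) ->
  forall i k, k.+1 = d i ->
  Qin i k - Qout i k = conform_mx (0 : 'M_(k.+1)) (mu f i).
Proof.
move=> hf i k hk; rewrite /mu conform_sub ?conform_sum //; congr (_ - _).
  rewrite (bigID (fun a => (0 < d (s a))%N && (0 < d (t a))%N)) /=.
  rewrite [X in _ + X]big1 ?addr0; last first.
    move=> a /andP[_ ha]; rewrite (mx_dim0 (f a)) ?mul0mx ?conform0 //.
  rewrite sum_sigE /Qin; apply: eq_big => a'.
    case: (eqVneq (t (val a')) i) => //= ->; by rewrite -hk /= eqxx.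
  move=> /andP[/eqP ti _]; rewrite conform_conform; last 2 first.
  - by rewrite ti.
  - by rewrite ti.
  rewrite hf conform_mul_adj //.
  - by case/andP: (valP a') => _ /prednK.
  - by case/andP: (valP a') => /prednK.
rewrite (bigID (fun a => (0 < d (s a))%N && (0 < d (t a))%N)) /=.
rewrite [X in _ + X]big1 ?addr0; last first.
  move=> a /andP[_ ha]; rewrite (mx_dim0 (f a)) ?mulmx0 ?conform0 //.
rewrite sum_sigE /Qout; apply: eq_big => a'.
  case: (eqVneq (s (val a')) i) => //= ->; by rewrite -hk /= eqxx.
move=> /andP[/eqP ti _]; rewrite conform_conform; last 2 first.
- by rewrite ti.
- by rewrite ti.
rewrite hf conform_adj_mul //.
- by case/andP: (valP a') => _ /prednK.
- by case/andP: (valP a') => /prednK.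
Qed.

End Qd.
Section Mats.
Variable C : numClosedFieldType.

Definition Fmx m (v : nat -> C) : 'M[C]_(m.+2, m.+1) :=
  \matrix_(r, c) (if r == c :> nat then v c else 0).

Lemma Fmx_adj_mul m v :
  adjmx (Fmx m v) *m Fmx m v = diag_mx (\row_(c < m.+1) ((v c)^* * v c)).
Proof.
apply/matrixP => c c'; rewrite !mxE (bigD1 (widen_ord (ltnW (ltnSn _)) c)) //=.
rewrite big1 ?addr0 => [|r /negbTE rc]; last first.
  rewrite !mxE; case: eqP => [rc'|]; last by rewrite conjC0 mul0r.
  by move: rc; rewrite -val_eqE /= rc' eqxx.
rewrite !mxE /= eqxx; case: (eqVneq c c') => [<-|nc]; first by rewrite eqxx mulr1n.
by rewrite mulr0n; case: eqP => [/val_inj h|]; [rewrite h eqxx in nc | rewrite mulr0].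
Qed.

Lemma Fmx_mul_adj m v :
  Fmx m v *m adjmx (Fmx m v) =
  diag_mx (\row_(r < m.+2) (if (r < m.+1)%N then v r * (v r)^* else 0)).
Proof.
apply/matrixP => r r'; rewrite !mxE.
case: (ltnP r m.+1) => hr.
  rewrite (bigD1 (Ordinal hr)) //= big1 ?addr0 => [|c /negbTE rc]; last first.
    rewrite !mxE; case: eqP => [rc'|]; last by rewrite mul0r.
    by move: rc; rewrite -val_eqE /= -rc' eqxx.
  rewrite !mxE /= eqxx; case: (eqVneq r r') => [<-|nc]; first by rewrite eqxx mulr1n.
  rewrite mulr0n; case: eqP => [h|]; last by rewrite conjC0 mulr0.
  by move: nc; rewrite -val_eqE /= h eqxx.
rewrite big1; first by case: (r == r').
move=> c _; rewrite !mxE; case: eqP => [rc|]; last by rewrite mul0r.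
by move: (ltn_ord c); rewrite -rc ltnNge hr.
Qed.

End Mats.
Lemma adjmx_conform (C : numClosedFieldType) m n (X : 'M[C]_m) :
  adjmx (conform_mx (0 : 'M[C]_n) X) = conform_mx 0 (adjmx X).
Proof.
case: (eqVneq m n) => [mn|nmn]; first by subst; rewrite !conform_mx_id.
rewrite !nonconform_mx ?nmn //.
by apply/matrixP => i j; rewrite !mxE conjC0.
Qed.

Lemma adjmxB (C : numClosedFieldType) m n (X Y : 'M[C]_(m, n)) :
  adjmx (X - Y) = adjmx X - adjmx Y.
Proof. by apply/matrixP => i j; rewrite !mxE rmorphB. Qed.

Lemma adjmx_sum (C : numClosedFieldType) m n (I : finType) (P : pred I)
  (F : I -> 'M[C]_(m, n)) :
  adjmx (\sum_(j | P j) F j) = \sum_(j | P j) adjmx (F j).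
Proof.
apply/matrixP => i j; rewrite !mxE !summxE rmorph_sum.
by apply: eq_bigr => k _; rewrite !mxE.
Qed.

Lemma adjmx_mu (C : numClosedFieldType) (I E : finType) (s t : E -> I)
  (dim : I -> nat) (f : forall e : E, 'M[C]_(dim (t e), dim (s e))) v :
  adjmx (mu f v) = mu f v.
Proof.
rewrite /mu adjmxB !adjmx_sum; congr (_ - _); apply: eq_bigr => e _;
by rewrite adjmx_conform adjmxM adjmxK.
Qed.
Lemma zmod_aux (M : zmodType) (b q r : M) : q - r = (b + q - r) + - b.
Proof. by rewrite addrAC (addrC b q) addrK. Qed.

Section Main.
Variables (C : numClosedFieldType) (V A : finType) (s t : A -> V) (d : V -> nat).
Variable a : forall i : V, 'I_(d i) -> C.
Arguments a : clear implicits.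

Lemma anat_ord i (j : 'I_(d i)) : anat a i j = a i j.
Proof. by rewrite /anat valK. Qed.

Lemma prod_anat i n : n = d i ->
  \prod_(j < d i) ('X - (a i j)%:P) = \prod_(j < n) ('X - (anat a i j)%:P).
Proof. by move=> ->; apply: eq_bigr => j _; rewrite anat_ord. Qed.

Section Back.
Variable g : forall e : QdA s t d, 'M[C]_(hatd (Qdtgt e), hatd (Qdsrc e)).
Hypothesis hg : forall x, mu g x = (Theta a x)%:M.

Lemma back_leg i k : (k < d i)%N ->
  char_poly (Bin g i k) = \prod_(j < k.+1) ('X - (anat a i k - anat a i j)%:P).
Proof.
elim: k => [|k IH] hk.
  rewrite Bin_0 char_poly_trig ?mx0_is_trig //.
  by apply: eq_bigr => j _; rewrite mxE (ord1 j) /= subrr.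
have hk' : (k < (d i).-1)%N by rewrite -ltnS prednK // (leq_ltn_trans _ hk).
rewrite (Bin_S g hk') sylvester -(Bout_lt g hk').
have := hg (existT _ i (Ordinal (ltnW hk))).
rewrite muQd Qin_lt ?Qout_lt // !addr0 /Theta /= hk => he.
have -> : Bout g i k = (anat a i k.+1 - anat a i k)%:M + 1 *: Bin g i k.
  rewrite scale1r -[Bout g i k](subKr (Bin g i k)) he -raddfN /= opprB.
  by rewrite addrC.
rewrite (char_poly_affine _ _ (IH (ltnW hk))) ?oner_neq0 //.
rewrite [RHS]big_ord_recr /= subrr polyC0 subr0 mulrC; congr (_ * _).
by apply: eq_bigr => j _ /=; congr ('X - _%:P); ring.
Qed.

Definition fdef (al : A) : 'M[C]_(d (t al), d (s al)) :=
  if insub al is Some al' then conform_mx 0 (g (inl al')) else 0.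

Lemma back_top i : char_poly (mu fdef i) = \prod_(j < d i) ('X - (a i j)%:P).
Proof.
case: (posnP (d i)) => [d0|hd].
  rewrite (prod_anat (esym d0)) big_ord0.
  by move: (mu fdef i); rewrite d0 => M; rewrite /char_poly det_mx00.
have hk : ((d i).-1).+1 = d i by rewrite prednK.
have hlt : ((d i).-1 < d i)%N by rewrite -{2}hk.
have := hg (existT _ i (Ordinal hlt)).
have hf : (((d i).-1).+1 < d i)%N = false by rewrite hk ltnn.
rewrite muQd Bout_top ?ltnn // add0r /Theta /= hf => he.
have hq : Qin g i (d i).-1 - Qout g i (d i).-1 = (anat a i (d i).-1)%:M + (-1) *: Bin g i (d i).-1.
  by rewrite -he scaleN1r (zmod_aux (Bin g i _)).
rewrite (Qtop (f := fdef) _ hk) in hq; last by move=> al'; rewrite /fdef valK.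
rewrite -(char_poly_conform (mu fdef i) (esym hk)) hq.
rewrite (char_poly_affine _ _ (back_leg hlt)) ?oppr_eq0 ?oner_eq0 //.
rewrite (prod_anat hk); apply: eq_bigr => j _; congr ('X - _%:P); ring.
Qed.

End Back.

End Main.
Section Gen2.
Variable C : numClosedFieldType.

Lemma conform_unitary n m (U : 'M[C]_m) : U \is unitarymx ->
  conform_mx (1%:M : 'M[C]_n) U \is unitarymx.
Proof.
move=> Uu; case: (eqVneq m n) => [mn|nmn]; first by subst; rewrite conform_mx_id.
rewrite nonconform_mx ?nmn //; apply/unitarymxP.
by rewrite mul1mx /adjmx trmx1 map_mx1.
Qed.

Lemma sqrtC_conj_mul (x : C) : 0 <= x -> (sqrtC x)^* * sqrtC x = x.
Proof. by move=> x0; rewrite geC0_conj ?sqrtC_ge0 // -expr2 sqrtCK. Qed.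

Lemma sqrtC_mul_conj (x : C) : 0 <= x -> sqrtC x * (sqrtC x)^* = x.
Proof. by move=> x0; rewrite mulrC sqrtC_conj_mul. Qed.

Lemma diag_diff n (x y : C) (b : nat -> C) :
  diag_mx (\row_(r < n) (x - b r)) - diag_mx (\row_(r < n) (y - b r)) = (x - y)%:M.
Proof.
apply/matrixP => r c; rewrite !mxE; case: (r == c); rewrite ?mulr1n ?mulr0n //.
  by ring.
by rewrite subrr.
Qed.

Lemma top_gen n p (U : 'M[C]_n) (a : 'I_n -> C) (b : nat -> C) (c : C) :
  U \is unitarymx -> n = p -> (forall r : 'I_n, b r = a r) ->
  conform_mx (1%:M : 'M[C]_p) (adjmx U) *m diag_mx (\row_(r < p) (c - b r))
    *m adjmx (conform_mx (1%:M : 'M[C]_p) (adjmx U))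
  + conform_mx (0 : 'M[C]_p) (adjmx U *m diag_mx (\row_r a r) *m U) = c%:M.
Proof.
move=> Uu np hb; subst p; rewrite !conform_mx_id adjmxK.
have -> : diag_mx (\row_(r < n) (c - b r)) = c%:M - diag_mx (\row_r a r).
  apply/matrixP => r r'; rewrite !mxE hb.
  by case: (r == r'); rewrite ?mulr1n ?mulr0n ?subrr.
rewrite mulmxBr mulmxBl mul_mx_scalar -scalemxAl unitary_adj_l // scalemx1.
by rewrite subrK.
Qed.

End Gen2.
Section Fwd.
Variables (C : numClosedFieldType) (V A : finType) (s t : A -> V) (d : V -> nat).
Variable a : forall i : V, 'I_(d i) -> C.
Arguments a : clear implicits.
Variable B : forall i : V, 'M[C]_(d i).
Arguments B : clear implicits.
Hypothesis hB : forall i, adjmx (B i) = B i.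
Hypothesis hc : forall i, char_poly (B i) = \prod_(k < d i) ('X - (a i k)%:P).
Hypothesis ha : forall i (k l : 'I_(d i)), (k <= l)%N -> a i k <= a i l.
Variable f : forall e : A, 'M[C]_(d (t e), d (s e)).
Hypothesis hf : forall i, mu f i = B i.

Lemma exU i : exists U : 'M[C]_(d i),
  (U \is unitarymx) && (B i == adjmx U *m diag_mx (\row_k a i k) *m U).
Proof.
have [U [Uu EU]] := spectral_sorted (hB i) (hc i).
by exists U; rewrite Uu EU eqxx.
Qed.
Definition U i : 'M[C]_(d i) := xchoose (exU i).
Lemma U_unitary i : U i \is unitarymx.
Proof. by have /andP[] := xchooseP (exU i). Qed.
Lemma U_spec i : B i = adjmx (U i) *m diag_mx (\row_k a i k) *m U i.
Proof. by have /andP[_ /eqP] := xchooseP (exU i). Qed.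

Definition Wm i n : 'M[C]_n := conform_mx 1%:M (adjmx (U i)).
Lemma Wm_unitary i n : Wm i n \is unitarymx.
Proof.
apply: conform_unitary; apply/unitarymxP.
by rewrite -[X in _ *m X]/(adjmx (adjmx (U i))) adjmxK unitary_adj_l ?U_unitary.
Qed.

Definition Fm i m : 'M[C]_(m.+2, m.+1) :=
  Fmx m (fun j => sqrtC (anat a i m.+1 - anat a i j)).

Definition gdef (e : QdA s t d) : 'M[C]_(hatd (Qdtgt e), hatd (Qdsrc e)) :=
  match e as e0 return 'M[C]_(hatd (Qdtgt e0), hatd (Qdsrc e0)) with
  | inl al => conform_mx 0 (f (val al))
  | inr b => Wm (tag b) (tagged b).+2 *m Fm (tag b) (tagged b)
  end.

Lemma anat_le i j m : (j <= m)%N -> (m < d i)%N -> anat a i j <= anat a i m.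
Proof.
move=> jm md; have jd : (j < d i)%N by apply: leq_ltn_trans md.
have e1 := anat_ord a (Ordinal jd); have e2 := anat_ord a (Ordinal md).
rewrite /= in e1 e2; rewrite e1 e2; exact: ha.
Qed.

Lemma Fm_adj_mul i m : (m.+1 < d i)%N ->
  adjmx (Fm i m) *m Fm i m =
  diag_mx (\row_(c < m.+1) (anat a i m.+1 - anat a i c)).
Proof.
move=> hm; rewrite /Fm Fmx_adj_mul; congr diag_mx; apply/rowP => c; rewrite !mxE.
by rewrite sqrtC_conj_mul // subr_ge0 anat_le // ltnW.
Qed.

Lemma Fm_mul_adj i m : (m.+1 < d i)%N ->
  Fm i m *m adjmx (Fm i m) =
  diag_mx (\row_(r < m.+2) (anat a i m.+1 - anat a i r)).
Proof.
move=> hm; rewrite /Fm Fmx_mul_adj; congr diag_mx; apply/rowP => r; rewrite !mxE.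
case: ltnP => hr.
  by rewrite sqrtC_mul_conj // subr_ge0 anat_le // ltnW.
have -> : nat_of_ord r = m.+1 by apply/eqP; rewrite eqn_leq hr -ltnS ltn_ord.
by rewrite subrr.
Qed.

Lemma BinF i k : (k < d i)%N ->
  Bin gdef i k = Wm i k.+1 *m diag_mx (\row_(r < k.+1) (anat a i k - anat a i r))
     *m adjmx (Wm i k.+1).
Proof.
case: k => [|m] hk.
  rewrite Bin_0; have -> : diag_mx (\row_(r < 1) (anat a i 0 - anat a i r)) = 0.
    by apply/matrixP => r c; rewrite !mxE (ord1 r) subrr mul0rn.
  by rewrite mulmx0 mul0mx.
have hm : (m < (d i).-1)%N by rewrite -ltnS prednK // (leq_ltn_trans _ hk).
rewrite (Bin_S gdef hm) /gb /= adjmxM !mulmxA -(mulmxA _ (Fm i m)) Fm_mul_adj //.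
Qed.

Lemma BoutF i k : (k.+1 < d i)%N ->
  Bout gdef i k = diag_mx (\row_(c < k.+1) (anat a i k.+1 - anat a i c)).
Proof.
move=> hk; have hm : (k < (d i).-1)%N by rewrite -ltnS prednK // (leq_ltn_trans _ hk).
rewrite (Bout_lt gdef hm) /gb /= adjmxM !mulmxA -(mulmxA _ (adjmx (Wm i k.+2))).
by rewrite unitary_adj_l ?Wm_unitary // mulmx1 Fm_adj_mul.
Qed.

Lemma fwd_vertex x : mu gdef x = (Theta a x)%:M.
Proof.
case: x => i k; rewrite muQd.
case: (ltnP k.+1 (d i)) => hk.
  rewrite Qin_lt ?Qout_lt // !addr0 (BinF (ltnW hk)) BoutF //.
  rewrite /Wm nonconform_mx; last by rewrite neq_ltn hk orbT.
  rewrite /adjmx trmx1 map_mx1 mulmx1 mul1mx diag_diff /Theta /= hk //.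
have hk' : k.+1 = d i by apply/eqP; rewrite eqn_leq hk ltn_ord.
rewrite Bout_top; last by rewrite ltn_predRL -leqNgt.
rewrite add0r -addrA (Qtop (f := f)) //; last first.
  move=> al'; rewrite conformK //.
  - by case/andP: (valP al') => _ /prednK.
  - by case/andP: (valP al') => /prednK.
rewrite (BinF (ltn_ord k)) hf (U_spec i) /Theta /= ltnNge hk /=.
apply: top_gen; [exact: U_unitary | by [] | exact: anat_ord].
Qed.

End Fwd.
Unset Implicit Arguments.

Theorem proposition4p2 (C : numClosedFieldType) (V A : finType) (s t : A -> V)
  (d : V -> nat) (B : forall i : V, 'M[C]_(d i)) (a : forall i : V, 'I_(d i) -> C) :
  (forall i, adjmx (B i) = B i) ->
  (forall i, char_poly (B i) = \prod_(k < d i) ('X - (a i k)%:P)) ->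
  (forall i (k l : 'I_(d i)), (k <= l)%N -> a i k <= a i l) ->
  ((exists f : forall e : A, 'M[C]_(d (t e), d (s e)), forall i, mu f i = B i)
   <->
   (exists g : forall e : QdA s t d, 'M[C]_(hatd (Qdtgt e), hatd (Qdsrc e)),
      forall x : QdV d, mu g x = (Theta a x)%:M)).
Proof.
move=> hB hc ha; split.
  move=> [f hf]; exists (gdef hB hc f); exact: fwd_vertex.
move=> [g hg].
have exW : forall i, exists W : 'M[C]_(d i),
    (W \is unitarymx) && (B i == adjmx W *m mu (fdef g) i *m W).
  move=> i; have [W [Wu EW]] := herm_similar (adjmx_mu (fdef g) i) (hB i)
     (etrans (back_top hg i) (esym (hc i))).
  by exists W; rewrite Wu EW eqxx.
pose W i := xchoose (exW i).
have Wu : forall i, W i \is unitarymx by move=> i; have /andP[] := xchooseP (exW i).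
have EW : forall i, B i = adjmx (W i) *m mu (fdef g) i *m W i.
  by move=> i; have /andP[_ /eqP] := xchooseP (exW i).
exists (fun e => adjmx (W (t e)) *m fdef g e *m W (s e)) => i.
by rewrite (mu_conj (fdef g) Wu) EW.
Qed.
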